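(* Let $(G,+,<)$ be an ordered abelian group (dense or discrete). Then $G$ is Dedekind complete if and only if $G$ satisfies Continuous Induction (CI).
   Context: An ordered abelian group $(G,+,<)$ is an abelian group with a linear order such that $x<y$ implies $x+z<y+z$ for all $x,y,z\in G$. A Dedekind cut is a nonempty downward closed subset $C\subseteq G$; it is proper if $C\neq G$. A gap is a proper cut with no least upper bound in $G$. $G$ is Dedekind complete if it has no gaps. Continuous Induction (CI) for $G$ is the statement: for every $S\subseteq G$, if (i) there is $g\in G$ with $(-\infty,g)\subseteq S$, and (ii) for every $x\in G$, if $(-\infty,x)\subseteq S$ then there is $y>x$ in $G$ with $(-\infty,y)\subseteq S$, then $S=G$. *)

(* Defs.v *)
(* the abelian group is a zmodType; the order is an explicit
   strict linear order relation [lt] on it, compatible with addition. *)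
From HB Require Import structures.
From mathcomp Require Import all_boot all_order all_algebra.
Set Implicit Arguments. Unset Strict Implicit. Unset Printing Implicit Defensive.
Import GRing.Theory.
Local Open Scope ring_scope.

Definition ordered_abelian_group (G : zmodType) (lt : G -> G -> Prop) : Prop :=
  (forall x, ~ lt x x) /\
  (forall x y z, lt x y -> lt y z -> lt x z) /\
  (forall x y, lt x y \/ x = y \/ lt y x) /\
  (forall x y z, lt x y -> lt (x + z) (y + z)).

Definition oag_le (G : zmodType) (lt : G -> G -> Prop) (x y : G) : Prop :=
  lt x y \/ x = y.

Definition dcut (G : zmodType) (lt : G -> G -> Prop) (C : G -> Prop) : Prop :=
  (exists x, C x) /\ (forall x y, C x -> oag_le lt y x -> C y).

Definition proper_cut (G : zmodType) (lt : G -> G -> Prop) (C : G -> Prop) : Prop :=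
  dcut lt C /\ exists x, ~ C x.

Definition is_lub (G : zmodType) (lt : G -> G -> Prop) (C : G -> Prop) (b : G) : Prop :=
  (forall c, C c -> oag_le lt c b) /\
  (forall b', (forall c, C c -> oag_le lt c b') -> oag_le lt b b').

Definition gap (G : zmodType) (lt : G -> G -> Prop) (C : G -> Prop) : Prop :=
  proper_cut lt C /\ ~ (exists b, is_lub lt C b).

Definition dedekind_complete (G : zmodType) (lt : G -> G -> Prop) : Prop :=
  forall C : G -> Prop, ~ gap lt C.

Definition below_in (G : zmodType) (lt : G -> G -> Prop) (x : G) (S : G -> Prop) : Prop :=
  forall z, lt z x -> S z.

Definition continuous_induction (G : zmodType) (lt : G -> G -> Prop) : Prop :=
  forall S : G -> Prop,
    (exists g, below_in lt g S) ->
    (forall x, below_in lt x S -> exists y, lt x y /\ below_in lt y S) ->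
    forall x, S x.

(* Main.v *)
Require Import Defs.
From mathcomp Require Import all_boot all_order all_algebra.
From Stdlib Require Import Classical.

Theorem proposition2p1 (G : zmodType) (lt : G -> G -> Prop) :
  ordered_abelian_group lt ->
  (dedekind_complete lt <-> continuous_induction lt).
Proof.
  intros [Hirr [Htr [Htot _]]].
  assert (Hle_lt : forall a b, ~ oag_le lt a b -> lt b a).
  { intros a b H. destruct (Htot a b) as [h|[h|h]]; auto;
    exfalso; apply H; unfold oag_le; auto. }
  assert (Hnlt : forall a b, oag_le lt a b -> ~ lt b a).
  { intros a b [h|h] h'. - exact (Hirr a (Htr _ _ _ h h')). - subst; exact (Hirr _ h'). }
  split.
  - intros Hc S [g Hg] Hstep x.
    apply NNPP; intros Hx.
    set (C := fun z => below_in lt z S).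
    apply (Hc C). split.
    + split.
      * split. { exists g; exact Hg. }
        intros a b Ca Hba z Hz. apply Ca.
        destruct Hba as [h|h]. { exact (Htr _ _ _ Hz h). } subst; exact Hz.
      * exists x. intros Cx. destruct (Hstep x Cx) as [y [Hxy Hy]]. exact (Hx (Hy x Hxy)).
    + intros [b [Hub Hleast]].
      assert (Cb : C b).
      { intros z Hz.
        assert (~ (forall c, C c -> oag_le lt c z)) as Hn.
        { intros Hz'. exact (Hnlt _ _ (Hleast z Hz') Hz). }
        apply NNPP; intros HSz. apply Hn; intros c Cc.
        apply NNPP; intros Hcz. apply HSz. apply Cc. apply Hle_lt; exact Hcz. }
      destruct (Hstep b Cb) as [y [Hby Hy]].
      exact (Hnlt _ _ (Hub y Hy) Hby).
  - intros Hci C [[[[c Cc] Hdown] [x Hx]] Hnolub].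
    apply Hx. apply (Hci C).
    + exists c. intros z Hz. apply (Hdown c z Cc). left; exact Hz.
    + intros a Ha. destruct (classic (C a)) as [Ca|Ca].
      * assert (~ (forall d, C d -> oag_le lt d a)) as Hn.
        { intros Hub. apply Hnolub. exists a. split; [exact Hub|].
          intros b' Hb'. exact (Hb' a Ca). }
        apply not_all_ex_not in Hn. destruct Hn as [d Hd].
        apply imply_to_and in Hd. destruct Hd as [Cd Hd].
        exists d. split. { apply Hle_lt; exact Hd. }
        intros z Hz. apply (Hdown d z Cd). left; exact Hz.
      * exfalso.
        assert (Hub : forall d, C d -> oag_le lt d a).
        { intros d Cd. apply NNPP; intros h. apply Ca. apply (Hdown d a Cd). left. apply Hle_lt; exact h. }
        apply Hnolub. exists a. split; [exact Hub|].
        intros b' Hb'. apply NNPP; intros h.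
        pose proof (Hle_lt _ _ h) as hb.
        apply Hnolub. exists b'. split; [exact Hb'|].
        intros b'' Hb''. exact (Hb'' b' (Ha b' hb)).
Qed.
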